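(* Let $a_{12},a_{34},d>0$ with $d>\max\{a_{12},a_{34}\}$, and consider the isosceles trapezium with vertices $A_1'=(-a_{12}/2,\,d)$, $A_2'=(a_{12}/2,\,d)$, $A_4=(-a_{34}/2,\,0)$, $A_3=(a_{34}/2,\,0)$; let $M_{12}=(0,d)$, $M_{34}=(0,0)$. Let $F$ be the intersection of the diagonals $A_1'A_3$, $A_2'A_4$ and $\theta=\angle A_1'FA_2'$. Let $F_{12}$ be the orthocenter of triangle $A_1'FA_2'$, $F_{34}$ the orthocenter of triangle $A_4FA_3$, $w(\theta)=2\sin\frac{\theta}{2}$, and $$l_{minT}=2|A_1'F_{12}|+2|A_3F_{34}|+w(\theta)|F_{12}F_{34}|.$$ Let $O_{12},O_{34}$ be the points on segment $M_{12}M_{34}$ with $\angle A_1'O_{12}A_2'=120^\circ$ and $\angle A_4O_{34}A_3=120^\circ$, and $$l_{minST}=2|A_1'O_{12}|+2|A_3O_{34}|+|O_{12}O_{34}|.$$ If $0<\theta<60^\circ$, then $l_{minT}<l_{minST}$; and if $60^\circ<\theta<90^\circ$, then $l_{minT}>l_{minST}$.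
   Context: $|XY|$ denotes Euclidean distance. $l_{minST}$ is the length of the full (unweighted) Steiner tree of the trapezium with Steiner points $O_{12},O_{34}$; $l_{minT}$ is the weighted length of the paper's ''construction tree'' with interior points $F_{12},F_{34}$ carrying weight $w(\theta)$ on the segment $F_{12}F_{34}$. *)

(* Defs.v *)
From Stdlib Require Import Reals Lra.
Open Scope R_scope.

Definition pt := (R * R)%type.

Definition vsub (P Q : pt) : pt := (fst P - fst Q, snd P - snd Q).
Definition dot (u v : pt) : R := fst u * fst v + snd u * snd v.

Definition edist (X Y : pt) : R := sqrt (dot (vsub X Y) (vsub X Y)).

Definition angle (P Q R0 : pt) : R :=
  acos (dot (vsub P Q) (vsub R0 Q) / (edist P Q * edist R0 Q)).

Definition on_seg (P Q X : pt) : Prop :=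
  exists t, 0 <= t <= 1 /\
    X = ((1 - t) * fst P + t * fst Q, (1 - t) * snd P + t * snd Q).

(* H is the orthocenter of triangle ABC: the altitudes from A and B pass
   through H (hence so does the one from C). *)
Definition is_orthocenter (A B C H : pt) : Prop :=
  dot (vsub H A) (vsub B C) = 0 /\ dot (vsub H B) (vsub A C) = 0.

(* Main.v *)
Require Import Defs.
From Stdlib Require Import Reals Lra Psatz.
Open Scope R_scope.

Lemma sqrt_eq (x y : R) : 0 <= y -> y * y = x -> sqrt x = y.
Proof. intros Hy Hx. apply sqrt_lem_1; try nra; auto. Qed.

Lemma angle_iso ax ay ox oy bx by0 a b : 0 < a ->
  ax - ox = -a -> bx - ox = a -> ay - oy = b -> by0 - oy = b ->
  angle (ax,ay) (ox,oy) (bx,by0) = acos ((b*b - a*a)/(b*b + a*a)).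
Proof.
  intros Ha H1 H2 H3 H4. unfold angle, edist, dot, vsub; simpl.
  rewrite H1, H2, H3, H4.
  replace (-a * -a + b*b) with (b*b+a*a) by ring.
  replace (a * a + b*b) with (b*b+a*a) by ring.
  rewrite sqrt_sqrt by nra. f_equal. unfold Rdiv. f_equal. ring.
Qed.

Lemma iso_bound a b : 0 < a -> -1 <= (b*b - a*a)/(b*b + a*a) <= 1.
Proof.
  intros Ha. set (c := (b*b - a*a)/(b*b + a*a)).
  assert (Hc : c * (b*b+a*a) = b*b - a*a) by (unfold c; field; nra).
  assert (HD : 0 < b*b+a*a) by nra.
  split.
  - destruct (Rle_lt_dec (-1) c); auto.
    assert ((c+1)*(b*b+a*a) < 0) by (apply Rmult_neg_pos; lra). nra.
  - destruct (Rle_lt_dec c 1); auto.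
    assert ((c-1)*(b*b+a*a) > 0) by (apply Rmult_gt_0_compat; lra). nra.
Qed.

Lemma acos_2pi3 c : -1 <= c <= 1 -> acos c = 2 * PI / 3 -> c = -1/2.
Proof.
  intros Hb H. rewrite <- (cos_acos c Hb), H.
  replace (2 * PI / 3) with (PI - PI/3) by field.
  rewrite Rtrigo_facts.cos_pi_minus, cos_PI3. lra.
Qed.

Theorem theorem3 (a12 a34 d : R) :
  0 < a12 -> 0 < a34 -> 0 < d -> Rmax a12 a34 < d ->
  let A1' : pt := (- a12 / 2, d) in
  let A2' : pt := (a12 / 2, d) in
  let A4 : pt := (- a34 / 2, 0) in
  let A3 : pt := (a34 / 2, 0) in
  let M12 : pt := (0, d) in
  let M34 : pt := (0, 0) in
  forall F F12 F34 O12 O34 : pt,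
    on_seg A1' A3 F -> on_seg A2' A4 F ->
    is_orthocenter A1' F A2' F12 ->
    is_orthocenter A4 F A3 F34 ->
    on_seg M12 M34 O12 -> angle A1' O12 A2' = 2 * PI / 3 ->
    on_seg M12 M34 O34 -> angle A4 O34 A3 = 2 * PI / 3 ->
    let theta := angle A1' F A2' in
    let w := 2 * sin (theta / 2) in
    let lminT := 2 * edist A1' F12 + 2 * edist A3 F34 + w * edist F12 F34 in
    let lminST := 2 * edist A1' O12 + 2 * edist A3 O34 + edist O12 O34 in
    (0 < theta < PI / 3 -> lminT < lminST) /\
    (PI / 3 < theta < PI / 2 -> lminT > lminST).
Proof.
  intros ha hb hd hmax A1' A2' A4 A3 M12 M34 F F12 F34 O12 O34
    [t [ht HF]] [u [hu HF']] [H12a H12b] [H34a H34b] [t1 [ht1 HO1]] Hang1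
    [t2 [ht2 HO2]] Hang2 theta w lminT lminST.
  assert (Hm1 : a12 < d) by (generalize (Rmax_l a12 a34); lra).
  assert (Hm2 : a34 < d) by (generalize (Rmax_r a12 a34); lra).
  clear hmax.
  destruct F as [fx fy], F12 as [x1 y1], F34 as [x3 y3], O12 as [p1 q1], O34 as [p2 q2].
  unfold A1', A2', A3, A4, M12, M34 in *; simpl in *.
  injection HF as HFx HFy. injection HF' as HF'x HF'y.
  injection HO1 as HO1x HO1y. injection HO2 as HO2x HO2y.
  assert (tu : t = u) by nra. subst u.
  assert (fx0 : fx = 0) by nra.
  assert (Ht : t * (a12 + a34) = a12) by nra.
  unfold dot, vsub in H12a, H12b, H34a, H34b; simpl in *.
  assert (x10 : x1 = 0) by nra.
  assert (x30 : x3 = 0) by nra.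
  set (k := (a12 + a34) / (2 * d)).
  set (h1 := t * d). set (h2 := (1 - t) * d).
  assert (hk : 0 < k) by (unfold k; apply Rdiv_lt_0_compat; lra).
  assert (ka : a12 = 2 * k * h1) by (unfold k, h1; rewrite <- Ht at 1; field; lra).
  assert (kb : a34 = 2 * k * h2) by (unfold k, h2; replace a34 with ((1-t)*(a12+a34)) at 1 by lra; field; lra).
  assert (tpos : 0 < t) by nra.
  assert (tlt : t < 1) by nra.
  assert (h1p : 0 < h1) by (unfold h1; nra).
  assert (h2p : 0 < h2) by (unfold h2; nra).
  assert (fyh : fy = h2) by (unfold h2; lra).
  assert (dh : d = h1 + h2) by (unfold h1, h2; ring).
  subst fx p1 p2 fy x1 x3.
  clear HF'x HF'y hu.
  clearbody k h1 h2. subst a12 a34 d.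
  assert (y1e : h1 + h2 - y1 = k * k * h1).
  { apply (Rmult_eq_reg_l h1); [| apply Rgt_not_eq; lra]. nra. }
  assert (y3e : y3 = k * k * h2).
  { apply (Rmult_eq_reg_l h2); [| apply Rgt_not_eq; lra]. nra. }
  clear H12a H12b H34a H34b.
  assert (y1d : y1 = h1 + h2 - k*k*h1) by lra. subst y1 y3. clear y1e.
  assert (Hr : sqrt (1 + k*k) * sqrt (1 + k*k) = 1 + k*k) by (apply sqrt_sqrt; nra).
  assert (rp : 0 < sqrt (1 + k*k)) by (apply sqrt_lt_R0; nra).
  set (r := sqrt (1 + k*k)) in *. clearbody r.
  assert (Htheta : theta = acos ((h1*h1 - (k*h1)*(k*h1))/(h1*h1 + (k*h1)*(k*h1)))).
  { unfold theta. apply angle_iso; nra. }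
  assert (Hcb := iso_bound (k*h1) h1 ltac:(nra)).
  set (c := (h1*h1 - (k*h1)*(k*h1))/(h1*h1 + (k*h1)*(k*h1))) in *.
  assert (Hc : c * (1 + k*k) = 1 - k*k) by (unfold c; field; nra).
  clearbody c.
  assert (Hcos : cos theta = c) by (rewrite Htheta; apply cos_acos; auto).
  assert (Hth : 0 <= theta <= PI) by (rewrite Htheta; apply acos_bound).
  clearbody theta.
  assert (sp : 0 <= sin (theta/2)) by (apply sin_ge_0; lra).
  assert (Hs2 : cos theta = 1 - 2 * sin (theta/2) * sin (theta/2)).
  { rewrite <- cos_2a_sin. f_equal. field. }
  unfold w in *. set (s := sin (theta/2)) in *. clearbody s.
  assert (Hsr2 : (s*r)*(s*r) = k*k).
  { replace ((s*r)*(s*r)) with ((s*s)*(r*r)) by ring. rewrite Hr. nra. }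
  assert (Hsr : s * r = k).
  { assert (0 <= s*r) by (apply Rmult_le_pos; lra).
    assert ((s*r - k)*(s*r+k) = 0) by nra.
    destruct (Rmult_integral _ _ H0); lra. }
  assert (k1 : k < 1) by nra.
  assert (Hq : sqrt 3 * sqrt 3 = 3) by (apply sqrt_sqrt; lra).
  assert (qp : 0 < sqrt 3) by (apply sqrt_lt_R0; lra).
  set (q := sqrt 3) in *. clearbody q.
  assert (q1' : 1 < q) by nra.
  set (e1 := h1 + h2 - q1).
  assert (e1p : 0 <= e1) by (unfold e1; nra).
  rewrite (angle_iso _ _ _ _ _ _ (k*h1) e1) in Hang1 by (unfold e1; lra || nra).
  apply acos_2pi3 in Hang1; [| apply iso_bound; nra].
  assert (He1 : q * e1 = k * h1).
  { assert (3 * (e1*e1) = (k*h1)*(k*h1)).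
    { assert (HH: (e1 * e1 - k * h1 * (k * h1)) = -1/2 * (e1 * e1 + k * h1 * (k * h1))).
      { rewrite <- Hang1. field. nra. }
      lra. }
    assert (0 <= q*e1) by nra.
    assert ((q*e1 - k*h1)*(q*e1+k*h1) = 0) by nra.
    destruct (Rmult_integral _ _ H1); nra. }
  set (e2 := q2).
  assert (e2p : 0 <= e2) by (unfold e2; nra).
  rewrite (angle_iso _ _ _ _ _ _ (k*h2) (-e2)) in Hang2 by (unfold e2; lra || nra).
  apply acos_2pi3 in Hang2; [| apply iso_bound; nra].
  assert (He2 : q * e2 = k * h2).
  { assert (3 * (e2*e2) = (k*h2)*(k*h2)).
    { assert (HH: (-e2 * -e2 - k * h2 * (k * h2)) = -1/2 * (-e2 * -e2 + k * h2 * (k * h2))).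
      { rewrite <- Hang2. field. nra. }
      lra. }
    assert (0 <= q*e2) by nra.
    assert ((q*e2 - k*h2)*(q*e2+k*h2) = 0) by nra.
    destruct (Rmult_integral _ _ H1); nra. }
  assert (q1e : q1 = h1 + h2 - e1) by (unfold e1; ring).
  unfold e2 in *; clear e2. clearbody e1. subst q1.
  assert (d1 : edist (- (2 * k * h1) / 2, h1 + h2) (0, h1 + h2 - k * k * h1) = k*h1*r).
  { unfold edist, dot, vsub; simpl. apply sqrt_eq; [apply Rmult_le_pos; nra|].
    transitivity (k*h1*k*h1*(r*r)); [ring | rewrite Hr; field]. }
  assert (d2 : edist (2 * k * h2 / 2, 0) (0, k * k * h2) = k*h2*r).
  { unfold edist, dot, vsub; simpl. apply sqrt_eq; [apply Rmult_le_pos; nra|].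
    transitivity (k*h2*k*h2*(r*r)); [ring | rewrite Hr; field]. }
  assert (d3 : edist (0, h1 + h2 - k * k * h1) (0, k * k * h2) = (h1+h2)*(1-k*k)).
  { unfold edist, dot, vsub; simpl. apply sqrt_eq; [apply Rmult_le_pos; nra| ring]. }
  assert (o1 : edist (- (2 * k * h1) / 2, h1 + h2) ((1 - t1) * 0 + t1 * 0, (1 - t1) * (h1 + h2) + t1 * 0) = 2*e1).
  { rewrite q1e. unfold edist, dot, vsub; simpl. apply sqrt_eq; [lra|].
    assert (3 * (e1*e1) = (k*h1)*(k*h1)) by (rewrite <- He1; replace (q*e1*(q*e1)) with ((q*q)*(e1*e1)) by ring; rewrite Hq; ring).
    nra. }
  assert (o2 : edist (2 * k * h2 / 2, 0) ((1 - t2) * 0 + t2 * 0, q2) = 2*q2).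
  { unfold edist, dot, vsub; simpl. apply sqrt_eq; [lra|].
    assert (3 * (q2*q2) = (k*h2)*(k*h2)) by (rewrite <- He2; replace (q*q2*(q*q2)) with ((q*q)*(q2*q2)) by ring; rewrite Hq; ring).
    nra. }
  assert (Hsum : q * (e1 + q2) = k * (h1 + h2)) by lra.
  assert (Hsum3 : 3 * (e1 + q2) = q * k * (h1 + h2)).
  { rewrite <- Hq. replace (q*k*(h1+h2)) with (q*(k*(h1+h2))) by ring. rewrite <- Hsum. ring. }
  assert (o3 : edist ((1 - t1) * 0 + t1 * 0, (1 - t1) * (h1 + h2) + t1 * 0) ((1 - t2) * 0 + t2 * 0, q2) = h1 + h2 - e1 - q2).
  { rewrite q1e. unfold edist, dot, vsub; simpl. apply sqrt_eq; [nra| ring]. }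
  assert (LT : lminT * r = 4 * k * (h1 + h2)).
  { unfold lminT. rewrite d1, d2, d3.
    transitivity (2*k*(h1+h2)*(r*r) + 2*(s*r)*(h1+h2)*(1-k*k)); [ring|].
    rewrite Hr, Hsr. ring. }
  assert (ST : lminST = (h1 + h2) * (1 + q * k)).
  { unfold lminST. rewrite o1, o2, o3. nra. }
  assert (Epoly : (1 + k*k)*((1+q*k)*(1+q*k)) - 16*(k*k) = (q*k-1)*(q*k*k*k+3*k*k-3*q*k-1)).
  { assert (E : (1 + k*k)*((1+q*k)*(1+q*k)) - 16*(k*k) = (q*k-1)*(q*k*k*k+3*k*k-3*q*k-1) + 4*k*k*(q*q-3)) by ring.
    rewrite Hq in E. lra. }
  assert (q15 : 3/2 < q) by nra.
  assert (G : q*k*k*k+3*k*k-3*q*k-1 < 0).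
  { assert (q*k*k < q) by nra. assert (k*(q*k*k+3*k-3*q) < 0) by nra. nra. }
  assert (RR : (r*(1+q*k))*(r*(1+q*k)) = (1 + k*k)*((1+q*k)*(1+q*k))).
  { rewrite <- Hr. ring. }
  assert (rq : 0 < r*(1+q*k)) by nra.
  split.
  - intros [th0 th1].
    assert (cl : cos (PI/3) < cos theta) by (apply cos_decreasing_1; lra).
    rewrite cos_PI3, Hcos in cl.
    assert (k3 : 3*(k*k) < 1) by nra.
    assert (qk : q*k < 1) by nra.
    assert (P : 16*(k*k) < (r*(1+q*k))*(r*(1+q*k))).
    { rewrite RR. assert (0 < (q*k-1)*(q*k*k*k+3*k*k-3*q*k-1)) by nra. lra. }
    assert (4*k < r*(1+q*k)) by nra.
    apply (Rmult_lt_reg_r r); [lra|]. rewrite LT, ST. nra.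
  - intros [th0 th1].
    assert (cl : cos theta < cos (PI/3)) by (apply cos_decreasing_1; lra).
    rewrite cos_PI3, Hcos in cl.
    assert (k3 : 1 < 3*(k*k)) by nra.
    assert (qk : 1 < q*k) by nra.
    assert (P : (r*(1+q*k))*(r*(1+q*k)) < 16*(k*k)).
    { rewrite RR. assert ((q*k-1)*(q*k*k*k+3*k*k-3*q*k-1) < 0) by nra. lra. }
    assert (r*(1+q*k) < 4*k) by nra.
    apply (Rmult_lt_reg_r r); [lra|]. rewrite LT, ST. nra.
Qed.
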